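(* Let $\Omega\subset\mathbb{R}^d$ be a connected, bounded open domain, let $\mathbf{r}=(\mathbf{r}_1,\ldots,\mathbf{r}_n)\in\Upsilon$, and assume the hyperplanes $\mathcal{P}_1(\mathbf{r}_1),\ldots,\mathcal{P}_n(\mathbf{r}_n)$ are pairwise distinct. Then the $n(d+1)$ functions $\{H_i(\mathbf{x}),\,x_1H_i(\mathbf{x}),\,\ldots,\,x_dH_i(\mathbf{x})\}_{i=1}^n$ are linearly independent as functions on $\Omega$.
   Context: $\mathcal{S}^{d-1}$ is the unit sphere in $\mathbb{R}^d$. For $\mathbf{x}\in\mathbb{R}^d$ write $\mathbf{y}=(1,x_1,\ldots,x_d)^T$. For $\mathbf{r}_i=(b_i,\boldsymbol{\omega}_i)\in\mathbb{R}^{d+1}$, $\mathcal{P}_i(\mathbf{r}_i)=\{\mathbf{x}\in\Omega:\boldsymbol{\omega}_i\cdot\mathbf{x}+b_i=0\}$. The admissible set is $\Upsilon=\{\mathbf{r}=(\mathbf{r}_1,\ldots,\mathbf{r}_n): \mathbf{r}_i=(b_i,\boldsymbol{\omega}_i),\ b_i\in\mathbb{R},\ \boldsymbol{\omega}_i\in\mathcal{S}^{d-1},\ \mathcal{P}_i(\mathbf{r}_i)\cap\Omega\neq\emptyset\}$. $H(t)$ is the Heaviside function ($H(t)=1$ for $t>0$, $H(t)=0$ for $t<0$), and $H_i(\mathbf{x})=H(\mathbf{r}_i\cdot\mathbf{y})=H(\boldsymbol{\omega}_i\cdot\mathbf{x}+b_i)$. Linear independence is understood for functions defined almost everywhere on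 $\Omega$. *)

(* Defs.v *)
From HB Require Import structures.
From mathcomp Require Import all_boot all_order all_algebra.
From mathcomp Require Import all_classical all_reals all_analysis.
Set Implicit Arguments. Unset Strict Implicit. Unset Printing Implicit Defensive.
Import Order.TTheory GRing.Theory Num.Theory.
Import numFieldNormedType.Exports.
Local Open Scope classical_set_scope.
Local Open Scope ring_scope.

Definition dotv (R : realType) (d : nat) (w x : 'rV[R]_d) : R :=
  \sum_(j < d) w ord0 j * x ord0 j.

Definition unit_sphere (R : realType) (d : nat) : set 'rV[R]_d :=
  [set w | dotv w w = 1].

(* Heaviside function; the value at 0 is irrelevant (statement is a.e.). *)
Definition heaviside (R : realType) (t : R) : R := if 0 < t then 1 else 0.

Definition hyperplane_in (R : realType) (d : nat) (Omega : set 'rV[R]_d)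
  (b : R) (w : 'rV[R]_d) : set 'rV[R]_d :=
  [set x | Omega x /\ dotv w x + b = 0].

(* The admissible set Upsilon: r = (r_1,...,r_n), r_i = (b i, w i). *)
Definition admissible (R : realType) (d n : nat) (Omega : set 'rV[R]_d)
  (b : 'I_n -> R) (w : 'I_n -> 'rV[R]_d) : Prop :=
  forall i, unit_sphere (w i) /\ hyperplane_in Omega (b i) (w i) !=set0.

Definition Hi (R : realType) (d : nat) (b : R) (w x : 'rV[R]_d) : R :=
  heaviside (dotv w x + b).

(* Lebesgue-null subsets of R^d: coverable by countably many closed boxes
   [a k, c k] of arbitrarily small total volume. *)
Definition in_box (R : realType) (d : nat) (a c x : 'rV[R]_d) : Prop :=
  forall j, a ord0 j <= x ord0 j <= c ord0 j.

Definition box_vol (R : realType) (d : nat) (a c : 'rV[R]_d) : R :=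
  \prod_(j < d) (c ord0 j - a ord0 j).

Definition lebesgue_null (R : realType) (d : nat) (A : set 'rV[R]_d) : Prop :=
  forall eps : R, 0 < eps ->
    exists (a c : nat -> 'rV[R]_d),
      (forall k j, a k ord0 j <= c k ord0 j) /\
      (A `<=` \bigcup_k [set x | in_box (a k) (c k) x]) /\
      (forall N, \sum_(k < N) box_vol (a k) (c k) < eps).

Definition ae_zero_on (R : realType) (d : nat) (Omega : set 'rV[R]_d)
  (f : 'rV[R]_d -> R) : Prop :=
  lebesgue_null [set x | Omega x /\ f x != 0].

Definition ae_lin_indep (R : realType) (d : nat) (I : finType)
  (Omega : set 'rV[R]_d) (f : I -> 'rV[R]_d -> R) : Prop :=
  forall c : I -> R,
    ae_zero_on Omega (fun x => \sum_(k : I) c k * f k x) -> forall k, c k = 0.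

(* The n(d+1) functions {H_i, x_1 H_i, ..., x_d H_i}_{i=1..n}, indexed by
   (i, k) with k = 0 for H_i and k = j+1 for x_{j+1} H_i. *)
Definition ridge_family (R : realType) (d n : nat)
  (b : 'I_n -> R) (w : 'I_n -> 'rV[R]_d) :
  'I_n * 'I_d.+1 -> 'rV[R]_d -> R :=
  fun p x =>
    let i := p.1 in let k := p.2 in
    match fintype.split (k : 'I_(1 + d)) with
    | inl _ => Hi (b i) (w i) x
    | inr j => x ord0 j * Hi (b i) (w i) x
    end.

(* Main.v *)
Require Import Defs.
From HB Require Import structures.
From mathcomp Require Import all_boot all_order all_algebra.
From mathcomp Require Import all_classical all_reals all_analysis.
From mathcomp Require Import measurable_realfun ring lra.
Set Implicit Arguments. Unset Strict Implicit. Unset Printing Implicit Defensive.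
Import Order.TTheory GRing.Theory Num.Theory.
Import numFieldNormedType.Exports.
Local Open Scope classical_set_scope.
Local Open Scope ring_scope.

Section CV.
Variable R : realType.

Lemma cover_vol (d : nat) : forall (P Q : 'I_d -> R) (A C : nat -> 'I_d -> R) (S : nat -> bool),
  (forall j, P j <= Q j) -> (forall k j, A k j <= C k j) ->
  (forall x : 'I_d -> R, (forall j, P j <= x j <= Q j) ->
      exists k, S k /\ forall j, A k j <= x j <= C k j) ->
  ((\prod_j (Q j - P j))%:E <= \sum_(k <oo) ((S k)%:R * \prod_j (C k j - A k j))%:E)%E.
Proof.
elim: d => [|d IH] P Q A C S PQ AC cov.
  have [k [Sk _]] := cov (fun j => P j) (fun j => ltac:(by case: j)).
  rewrite big_ord0.
  apply: (le_trans _ (@nneseries_lim_ge _ _ _ 0%N k.+1 _)); last first.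
    by move=> n _ _; rewrite lee_fin big_ord0 mulr1 ler0n.
  rewrite big_mkord (bigD1 (Ordinal (ltnSn k))) //= Sk big_ord0 mulr1.
  rewrite -[X in (X <= _)%E]adde0 leeD2l // sume_ge0 // => i _.
  by rewrite lee_fin big_ord0 mulr1 ler0n.

set P0 := P ord0; set Q0 := Q ord0.
set V' := \prod_(j < d) (Q (lift ord0 j) - P (lift ord0 j)).
pose vol' k := \prod_(j < d) (C k (lift ord0 j) - A k (lift ord0 j)).
pose I k := [set` `[A k ord0, C k ord0]] : set R.
pose g k t := (((S k)%:R * vol' k) * \1_(I k) t)%:E.
have vol'0 k : 0 <= vol' k by apply: prodr_ge0 => j _; rewrite subr_ge0.
have r0 k : 0 <= (S k)%:R * vol' k by rewrite mulr_ge0.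
have V'0 : 0 <= V' by apply: prodr_ge0 => j _; rewrite subr_ge0.
have mD : measurable (([set` `[P0, Q0]]) : set R) by exact: measurable_itv.
have key1 : forall t, [set` `[P0, Q0]] t -> (V'%:E <= \sum_(k <oo) g k t)%E.
  move=> t; rewrite /= in_itv /= => /andP [Pt tQ].
  have := IH (fun j => P (lift ord0 j)) (fun j => Q (lift ord0 j))
    (fun k j => A k (lift ord0 j)) (fun k j => C k (lift ord0 j))
    (fun k => S k && (A k ord0 <= t <= C k ord0)).
  move=> /(_ (fun j => PQ _) (fun k j => AC _ _)) H.
  have {}H := H _.
  rewrite (@eq_eseriesr _ _ (fun k => g k t)) in H; last first.
    move=> k; rewrite /g indicE /I mem_setE in_itv /= /vol'.
    by case: (S k); case: (A k ord0 <= t <= C k ord0); rewrite /= ?mul1r ?mul0r ?mulr1 ?mulr0.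
  apply: H => x' Hx'.
  pose x := fun i : 'I_d.+1 => if unlift ord0 i is Some j then x' j else t.
  have [k [Sk Hk]] : exists k, S k /\ forall j, A k j <= x j <= C k j.
    apply: cov => i; rewrite /x; case: unliftP => [j ->|->] //.
    by rewrite Pt tQ.
  exists k; split.
    by have := Hk ord0; rewrite /x unlift_none Sk.
  by move=> j; have := Hk (lift ord0 j); rewrite /x liftK.
have key3 k : (\int[lebesgue_measure]_(t in [set` `[P0, Q0]]) g k t <=
     ((S k)%:R * vol' k * (C k ord0 - A k ord0))%:E)%E.
  have HZ := @integralZl_indic _ _ _ lebesgue_measure _ mD (fun _ => I k) ((S k)%:R * vol' k).
  rewrite /= in HZ; rewrite /g HZ; first last.
  - exact: measurable_itv.
  - by move=> /lt_geF; rewrite r0.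
  rewrite integral_indic //; last exact: measurable_itv.
  rewrite (EFinM ((S k)%:R * vol' k) (C k ord0 - A k ord0)); apply: lee_pmul => //; first by rewrite lee_fin.
  have HH : (lebesgue_measure (I k `&` [set` `[P0,Q0]]) <= lebesgue_measure (I k))%E.
    apply: le_measure; last exact: subIsetl.
    - by rewrite inE; apply: measurableI => //; exact: measurable_itv.
    - by rewrite inE; exact: measurable_itv.
  apply: (le_trans HH).
  by rewrite lebesgue_measure_itv /=; case: ifP => _; rewrite ?lee_fin ?subr_ge0 ?AC.
have mg k : measurable_fun [set` `[P0, Q0]] (g k).
  apply/measurable_EFinP; apply: measurable_funM; first exact: measurable_cst.
  by apply: measurable_indic; exact: measurable_itv.
have g0 k t : [set` `[P0, Q0]] t -> (0 <= g k t)%E.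
  by move=> _; rewrite lee_fin mulr_ge0 // indicE ler0n.
have LHS : (\int[lebesgue_measure]_(t in [set` `[P0, Q0]]) V'%:E =
            (V' * (Q0 - P0))%:E)%E.
  have HM : lebesgue_measure ([set` `[P0, Q0]] : set R) = (Q0 - P0)%:E.
    rewrite lebesgue_measure_itv /=.
    case: ifP => [_|]; first by rewrite -EFinD.
    rewrite lte_fin => /negbT; rewrite -leNgt => QP.
    have -> : Q0 = P0 by apply/eqP; rewrite eq_le QP PQ.
    by rewrite subrr.
  rewrite (integral_cst lebesgue_measure mD V'%:E).
  transitivity (V'%:E * (Q0 - P0)%:E)%E; last by rewrite EFinM.
  by congr (_ * _)%E.
rewrite big_ord_recl.
apply: (@le_trans _ _ (\sum_(k <oo) ((S k)%:R * vol' k * (C k ord0 - A k ord0))%:E)%E); last first.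
  apply: lee_nneseries => [i _ _|n _]; first by rewrite lee_fin mulr_ge0 // subr_ge0.
  by rewrite big_ord_recl lee_fin le_eqVlt; apply/orP; left; apply/eqP; rewrite /vol'; ring.
rewrite (mulrC (Q ord0 - P ord0)) -LHS.
have mS : measurable_fun [set` `[P0, Q0]] (fun t => \sum_(k <oo) g k t)%E.
  by apply: (@ge0_emeasurable_sum _ _ _ _ g xpredT) => [k x Dx _|k _]; [exact: g0|exact: mg].
have HI := ge0_le_integral lebesgue_measure mD _ _ mS key1.
apply: (le_trans (HI _ _)).
- by move=> t _; rewrite lee_fin.
- exact: measurable_cst.
rewrite integral_nneseries //.
by apply: lee_nneseries => [i _ _|n _]; [apply: integral_ge0 => t; exact: g0|exact: key3].
Qed.

Lemma not_null_cube d (S : set 'rV[R]_d) (q : 'rV[R]_d) (e : R) : 0 < e ->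
  (forall x : 'rV[R]_d, (forall j, q ord0 j - e <= x ord0 j <= q ord0 j + e) -> S x) ->
  ~ lebesgue_null S.
Proof.
move=> e0 HS Hnull.
set vol := \prod_(j < d) ((q ord0 j + e) - (q ord0 j - e)).
have vol0 : 0 < vol by apply: prodr_gt0 => j _; rewrite subr_gt0 ltrBlDr -addrA ltrDl addr_gt0.
have [a [c [ac [cov sm]]]] := Hnull (vol / 2) (divr_gt0 vol0 (ltr0Sn _ _)).
have H := @cover_vol d (fun j => q ord0 j - e) (fun j => q ord0 j + e)
   (fun k j => a k ord0 j) (fun k j => c k ord0 j) (fun _ => true).
have PQ j : q ord0 j - e <= q ord0 j + e.
  by rewrite lerBlDr -addrA lerDl ltW // addr_gt0.
have {H} := H PQ ac.
move=> H; have {H} := H _.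
rewrite (@eq_eseriesr _ _ (fun k => (\prod_(j < d) (c k ord0 j - a k ord0 j))%:E)); last first.
  by move=> k _; rewrite mul1r.
move=> H.
have : ((vol%:E <= (vol / 2)%:E))%E.
  apply: (le_trans (H _)).
    move=> x Hx; have := cov (\row_j x j) (HS _ _).
    have Hr : forall j, q ord0 j - e <= (\row_j x j) ord0 j <= q ord0 j + e.
      by move=> j; rewrite mxE.
    move=> /(_ Hr) [k _ Hk]; exists k; split => // j.
    by have := Hk j; rewrite mxE.
  apply: lime_le; first by apply: is_cvg_ereal_nneg_natsum => n _; rewrite lee_fin; apply: prodr_ge0 => j _; rewrite subr_ge0.
  apply: nearW => N; rewrite -(big_morph EFin EFinD (erefl 0%:E)) lee_fin big_mkord ltW //.
rewrite lee_fin => Hv; lra.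
Qed.

Lemma affine_zero d (Omega : set 'rV[R]_d) (F : 'rV[R]_d -> R) (q : 'rV[R]_d) (e : R)
  (C0 : R) (Aa : 'I_d -> R) : 0 < e -> ae_zero_on Omega F ->
  (forall x : 'rV[R]_d, (forall j, q ord0 j - e <= x ord0 j <= q ord0 j + e) ->
     Omega x /\ F x = C0 + \sum_j Aa j * x ord0 j) ->
  C0 + \sum_j Aa j * q ord0 j = 0.
Proof.
move=> e0 Hae HF; apply/eqP/negPn/negP => Hv.
set v := C0 + \sum_j Aa j * q ord0 j in Hv.
set M := 1 + \sum_j `|Aa j|.
have M0 : 0 < M by rewrite ltr_wpDr // sumr_ge0.
have v0 : 0 < `|v| by rewrite normr_gt0.
set e' := Num.min e (`|v| / (2 * M)).
have e'0 : 0 < e' by rewrite lt_min e0 divr_gt0 // mulr_gt0.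
have e'e : e' <= e by rewrite ge_min lexx.
have e'v : e' * M <= `|v| / 2.
  have hm : e' <= `|v| / (2 * M) by rewrite ge_min lexx orbT.
  rewrite (le_trans (ler_wpM2r (ltW M0) hm)) //.
  rewrite le_eqVlt; apply/orP; left; apply/eqP; field; by rewrite gt_eqF.
apply: (not_null_cube e'0 _ Hae) => x Hx.
have Hx' : forall j, q ord0 j - e <= x ord0 j <= q ord0 j + e.
  move=> j; have /andP [h1 h2] := Hx j; apply/andP; split.
    by rewrite (le_trans _ h1) // lerB.
  by rewrite (le_trans h2) // lerD.
have [Ox Fx] := HF x Hx'; split => //; rewrite Fx.
have Hd : `|(C0 + \sum_j Aa j * x ord0 j) - v| <= `|v| / 2.
  have -> : (C0 + \sum_j Aa j * x ord0 j) - v = \sum_j Aa j * (x ord0 j - q ord0 j).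
    rewrite /v opprD addrACA subrr add0r -sumrB; apply: eq_bigr => j _; by rewrite mulrBr.
  apply: (le_trans (ler_norm_sum _ _ _)); apply: le_trans e'v.
  rewrite /M mulrDr mulr1 mulr_sumr -[X in X <= _]add0r; apply: lerD; first exact: ltW.
  apply: ler_sum => j _; rewrite normrM mulrC; apply: ler_wpM2r => //.
  have /andP [h1 h2] := Hx j; rewrite ler_norml; apply/andP; split; lra.
apply/eqP => H0; move: Hd; rewrite H0 sub0r normrN; lra.
Qed.
End CV.
Section S2.
Variable R : realType.
Lemma ridge_sum d n (b : 'I_n -> R) (w : 'I_n -> 'rV[R]_d) (c : 'I_n * 'I_d.+1 -> R) x :
  \sum_(p : 'I_n * 'I_d.+1) c p * ridge_family b w p x =
  \sum_i Hi (b i) (w i) x * (c (i, ord0) + \sum_j c (i, lift ord0 j) * x ord0 j).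
Proof.
rewrite (eq_bigr (fun p => (fun i k => c (i, k) * ridge_family b w (i, k) x) p.1 p.2)); last by move=> [i k].
rewrite -(pair_bigA _ (fun i k => c (i, k) * ridge_family b w (i, k) x)) /=.
apply: eq_bigr => i _; rewrite big_ord_recl mulrDr mulr_sumr.
have s0 : fintype.split (ord0 : 'I_(1 + d)) = inl ord0.
  have -> : (ord0 : 'I_(1 + d)) = lshift d (ord0 : 'I_1) by apply: val_inj.
  exact: (unsplitK (inl _)).
have s1 j : @fintype.split 1 d (@lift d.+1 ord0 j) = inr j.
  have -> : (@lift d.+1 ord0 j) = rshift 1 j by apply: val_inj.
  exact: (unsplitK (inr _)).
rewrite /ridge_family /= s0 mulrC; congr (_ + _); apply: eq_bigr => j _.
by rewrite s1; ring.
Qed.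
End S2.

Section S3.
Variable R : realType.
Variable d : nat.
Implicit Types (w x y : 'rV[R]_d).

Lemma dotvDr w x y : dotv w (x + y) = dotv w x + dotv w y.
Proof. by rewrite /dotv -big_split; apply: eq_bigr => j _; rewrite mxE mulrDr. Qed.
Lemma dotvZr w a x : dotv w (a *: x) = a * dotv w x.
Proof. by rewrite /dotv mulr_sumr; apply: eq_bigr => j _; rewrite mxE mulrCA. Qed.
Lemma dotvNr w x : dotv w (- x) = - dotv w x.
Proof. by rewrite -scaleN1r dotvZr mulN1r. Qed.
Lemma dotvBr w x y : dotv w (x - y) = dotv w x - dotv w y.
Proof. by rewrite dotvDr dotvNr. Qed.
Lemma dotvC w x : dotv w x = dotv x w.
Proof. by apply: eq_bigr => j _; rewrite mulrC. Qed.

Lemma unit_le1 w : unit_sphere w -> forall k, `|w ord0 k| <= 1.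
Proof.
rewrite /unit_sphere /dotv /= => H k.
have : w ord0 k * w ord0 k <= 1.
  rewrite -H (bigD1 k) //= lerDl sumr_ge0 // => j _; rewrite -expr2 sqr_ge0 //.
move=> h; rewrite ler_norml; apply/andP; split; nra.
Qed.

Lemma dotv_bound w x e : unit_sphere w -> (forall k, `|x ord0 k| <= e) ->
  `|dotv w x| <= d%:R * e.
Proof.
move=> uw hx; apply: (le_trans (ler_norm_sum _ _ _)).
have -> : d%:R * e = \sum_(k < d) e by rewrite sumr_const card_ord mulr_natl.
apply: ler_sum => k _; rewrite normrM -[e]mul1r.
apply: ler_pM => //; exact: unit_le1.
Qed.


Lemma open_cube (Omega : set 'rV[R]_d) p : open Omega -> Omega p ->
  exists2 r : R, 0 < r & forall x : 'rV[R]_d, (forall j, `|x ord0 j - p ord0 j| <= r) -> Omega x.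
Proof.
move=> oO Op; have := oO p Op; move=> /nbhs_ballP [e e0 He].
exists (e / 2); first by rewrite divr_gt0.
move=> x Hx; apply: He; split => //.
move=> i j; rewrite (ord1 i) /ball /= .
rewrite distrC; apply: (le_lt_trans (Hx j)); rewrite /= in e0; lra.
Qed.

Lemma good_point n (Omega : set 'rV[R]_d) (b : 'I_n -> R) (w : 'I_n -> 'rV[R]_d) i0 :
  open Omega -> admissible Omega b w ->
  (forall i j : 'I_n, i != j ->
     hyperplane_in Omega (b i) (w i) <> hyperplane_in Omega (b j) (w j)) ->
  exists y, Omega y /\ dotv (w i0) y + b i0 = 0 /\
            forall j, j != i0 -> dotv (w j) y + b j != 0.
Proof.
move=> oO adm dist.
have [uw0 [p0 [Op0 hp0]]] := adm i0.
have [r0 r00 Hr0] := open_cube oO Op0.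
set w0 := w i0 in uw0 hp0 *.
set eps := r0 / (d.+1)%:R.
have eps0 : 0 < eps by rewrite divr_gt0.
pose u (s : R) : 'rV[R]_d := \row_k s ^+ k.+1.
pose v s := u s - dotv w0 (u s) *: w0.
pose y s := p0 + eps *: v s.
pose alpha j := dotv (w j) p0 + b j.
pose z j k := w j ord0 k - dotv (w j) w0 * w0 ord0 k.
have phiE j s : dotv (w j) (y s) + b j = alpha j + eps * \sum_(k < d) z j k * s ^+ k.+1.
  have -> : \sum_(k < d) z j k * s ^+ k.+1 =
      dotv (w j) (u s) - dotv w0 (u s) * dotv (w j) w0.
    rewrite /z /dotv mulr_suml -sumrB; apply: eq_bigr => k _; rewrite /u mxE; ring.
  rewrite /y dotvDr dotvZr /v dotvBr dotvZr /alpha; ring.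
have hy0 s : dotv w0 (y s) + b i0 = 0.
  rewrite /y dotvDr dotvZr /v dotvBr dotvZr.
  have -> : dotv w0 w0 = 1 by exact: uw0.
  by rewrite mulr1 subrr mulr0 addr0 hp0.
have Oy s : 0 <= s <= 1 -> Omega (y s).
  move=> /andP [s0 s1]; apply: Hr0 => k.
  rewrite /y /v /u !mxE addrC addrK normrM gtr0_norm //.
  have hsk : `|s ^+ k.+1| <= 1 by rewrite normrX exprn_ile1 // ger0_norm.
  have ht : `|dotv w0 (\row_k0 s ^+ k0.+1)| <= d%:R * 1.
    apply: dotv_bound; first exact: uw0.
    by move=> k0; rewrite mxE normrX exprn_ile1 // ger0_norm.
  have hw := unit_le1 uw0 k.
  have : `|s ^+ k.+1 - dotv w0 (\row_k0 s ^+ k0.+1) * w0 ord0 k| <= 1 + d%:R.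
    apply: (le_trans (ler_normB _ _)); apply: lerD => //.
    rewrite normrM -[d%:R]mulr1; apply: ler_pM => //; by rewrite -[d%:R]mulr1.
  move=> h; apply: (le_trans (ler_wpM2l (ltW eps0) h)).
  have -> : 1 + d%:R = (d.+1)%:R :> R by rewrite -natr1 addrC.
  by rewrite /eps divfK // pnatr_eq0.
pose p j : {poly R} := (alpha j)%:P + \sum_(k < d) (eps * z j k) *: 'X^(k.+1).
have pE j s : (p j).[s] = dotv (w j) (y s) + b j.
  rewrite phiE /p hornerD hornerC horner_sum mulr_sumr; congr (_ + _).
  by apply: eq_bigr => k _; rewrite hornerZ hornerXn mulrA.
have pcoef0 j : (p j)`_0 = alpha j.
  rewrite /p coefD coefC /= coef_sum big1 ?addr0 // => k _.
  by rewrite coefZ coefXn /= mulr0.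
have pcoefS j (k : 'I_d) : (p j)`_k.+1 = eps * z j k.
  rewrite /p coefD coefC /= add0r coef_sum (bigD1 k) //= coefZ coefXn eqxx mulr1.
  rewrite big1 ?addr0 // => k' hk'; rewrite coefZ coefXn.
  have -> : (k.+1 == k'.+1) = false.
    apply/negbTE; rewrite eqSS; apply: contra hk' => /eqP h; apply/eqP/val_inj => /=.
    by rewrite h.
  by rewrite mulr0.
have pnz j : j != i0 -> p j != 0.
  move=> ji; apply/negP => /eqP pj0.
  have a0 : alpha j = 0 by rewrite -pcoef0 pj0 coef0.
  have z0 k : z j k = 0.
    have : eps * z j k = 0 by rewrite -pcoefS pj0 coef0.
    by move/eqP; rewrite mulf_eq0 gt_eqF //= => /eqP.
  set c := dotv (w j) w0.
  have wjE k : w j ord0 k = c * w0 ord0 k.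
    by have := z0 k; rewrite /z; move/eqP; rewrite subr_eq0 => /eqP.
  have dj x : dotv (w j) x = c * dotv w0 x.
    by rewrite /dotv mulr_sumr; apply: eq_bigr => k _; rewrite wjE mulrA.
  have c2 : c * c = 1.
    have := (adm j).1; rewrite /unit_sphere /= dj (dotvC w0) => h.
    by rewrite {1}/c; exact: h.
  have e1 : dotv w0 p0 = - b i0 by lra.
  have bj : b j = c * b i0.
    by move: a0; rewrite /alpha dj e1; nra.
  have cnz : c != 0 by apply/eqP => c0; move: c2; rewrite c0 mul0r; lra.
  apply: (dist i0 j); first by rewrite eq_sym.
  rewrite /hyperplane_in; apply/funext => x /=; apply/propext; split => -[Ox hx]; split => //.
    by rewrite dj bj -mulrDr hx mulr0.
  move: hx; rewrite dj bj -mulrDr => /eqP; rewrite mulf_eq0 (negbTE cnz) /= => /eqP.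
  by [].
pose P := \prod_(j | j != i0) p j.
have Pnz : P != 0 by apply/prodf_neq0 => j ji; exact: pnz.
pose rs := [seq ((k.+1)%:R : R)^-1 | k <- iota 0 (size P)].
have : ~~ all (root P) rs.
  apply/negP => allr.
  have urs : uniq rs.
    rewrite map_inj_uniq ?iota_uniq // => a a' /invr_inj /eqP.
    by rewrite eqr_nat eqSS => /eqP.
  have := max_poly_roots Pnz allr urs.
  by rewrite size_map size_iota ltnn.
case/allPn => s /mapP [k _ ->] nroot.
exists (y (k.+1%:R^-1)); split.
  apply: Oy; rewrite invr_ge0 ler0n /= invf_le1 ?ltr0n //.
  by rewrite ler1n.
split; first exact: hy0.
move=> j ji; rewrite -pE; apply/eqP => h; move: nroot.
by rewrite /root /P horner_prod (bigD1 j) //= h mul0r eqxx.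
Qed.

End S3.


Section S4.
Variable R : realType.

Lemma heav_stable (v e : R) : `|e| < `|v| -> heaviside (v + e) = heaviside v.
Proof.
rewrite /heaviside => h.
have h1 := ler_norm e; have h2 : - e <= `|e| by rewrite -normrN ler_norm.
have h3 := ler_norm v; have h4 : - v <= `|v| by rewrite -normrN ler_norm.
case: (lerP 0 v) => hv; [move: h; rewrite (ger0_norm hv) => h| move: h; rewrite (ltr0_norm hv) => h].
  case: (ltP 0 (v + e)) => H1; case: (ltP 0 v) => H2 //; exfalso; lra.
case: (ltP 0 (v + e)) => H1; case: (ltP 0 v) => H2 //; exfalso; lra.
Qed.

Lemma affine_coef d (Omega : set 'rV[R]_d) (F : 'rV[R]_d -> R) (q : 'rV[R]_d) (e : R)
  (C0 : R) (Aa : 'I_d -> R) : 0 < e -> ae_zero_on Omega F ->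
  (forall x : 'rV[R]_d, (forall j, q ord0 j - e <= x ord0 j <= q ord0 j + e) ->
     Omega x /\ F x = C0 + \sum_j Aa j * x ord0 j) ->
  C0 = 0 /\ forall j, Aa j = 0.
Proof.
move=> e0 Hae HF.
have e20 : 0 < e / 2 by rewrite divr_gt0.
have G0 (z : 'rV[R]_d) : (forall j, q ord0 j - e / 2 <= z ord0 j <= q ord0 j + e / 2) ->
    C0 + \sum_j Aa j * z ord0 j = 0.
  move=> hz; apply: (affine_zero e20 Hae) => x hx; apply: HF => j.
  have /andP [a1 a2] := hz j; have /andP [a3 a4] := hx j.
  apply/andP; split; lra.
have Gq : C0 + \sum_j Aa j * q ord0 j = 0.
  by apply: G0 => j; apply/andP; split; lra.
have GA j : Aa j = 0.
  have := G0 (q + (e / 2) *: delta_mx ord0 j).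
  have hE : forall k, (q + (e / 2) *: delta_mx ord0 j) ord0 k =
      q ord0 k + (e / 2) * (k == j)%:R.
    by move=> k; rewrite !mxE eqxx /= eq_sym.
  move=> /(_ _) H.
  have {H} := H (fun k => ltac:(rewrite hE; case: (k == j); rewrite /= ?mulr1 ?mulr0 ?addr0; apply/andP; split; lra)).
  under eq_bigr => k _ do rewrite hE mulrDr.
  rewrite big_split /= addrA Gq add0r (bigD1 j) //= eqxx mulr1 big1 ?addr0.
    move=> /eqP; rewrite mulf_eq0 (gt_eqF e20) orbF => /eqP //.
  by move=> k /negbTE ->; rewrite mulr0 mulr0.
split => //; move: Gq; rewrite big1 ?addr0 // => k _; by rewrite GA mul0r.
Qed.

Lemma sum_reorg d n (h : 'I_n -> R) (c : 'I_n * 'I_d.+1 -> R) (x : 'rV[R]_d) :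
  \sum_i h i * (c (i, ord0) + \sum_(j < d) c (i, lift ord0 j) * x ord0 j) =
  \sum_i h i * c (i, ord0) + \sum_(j < d) (\sum_i h i * c (i, lift ord0 j)) * x ord0 j.
Proof.
under eq_bigr => i _ do rewrite mulrDr.
rewrite big_split /=; congr (_ + _).
under eq_bigr => i _ do rewrite mulr_sumr.
rewrite exchange_big /=; apply: eq_bigr => j _; rewrite mulr_suml.
by apply: eq_bigr => i _; rewrite mulrA.
Qed.
End S4.

Unset Implicit Arguments.

Theorem lemma2p2 (R : realType) (d n : nat) (Omega : set 'rV[R]_d)
  (b : 'I_n -> R) (w : 'I_n -> 'rV[R]_d) :
  open Omega -> connected Omega ->
  (exists M : R, forall x, Omega x -> `|x| <= M) ->
  admissible Omega b w ->
  (forall i j : 'I_n, i != j ->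
     hyperplane_in Omega (b i) (w i) <> hyperplane_in Omega (b j) (w j)) ->
  ae_lin_indep Omega (ridge_family b w).
Proof.
move=> oO _ _ adm dist c Hae [i0 k0].
suff [H1 H2] : c (i0, ord0) = 0 /\ forall j : 'I_d, c (i0, lift ord0 j) = 0.
  by case: (unliftP ord0 k0) => [j ->|->].
have [y [Oy [hy hny]]] := good_point i0 oO adm dist.
have [r r0 Hr] := open_cube oO Oy.
have uw j : unit_sphere (w j) := (adm j).1.
pose m := \big[Num.min/1]_(j | j != i0) `|dotv (w j) y + b j|.
have m0 : 0 < m.
  rewrite /m; elim/big_ind: _ => // [a a' ha ha'|j ji]; first by rewrite lt_min ha ha'.
  by rewrite normr_gt0 hny.
have mle j : j != i0 -> m <= `|dotv (w j) y + b j|.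
  by move=> ji; rewrite /m (bigD1 j) //= ge_min lexx.
pose D : R := d%:R + 1.
have D0 : 0 < D by rewrite ltr_wpDl ?ler0n.
pose dl := Num.min r (m / (2 * D)).
have dl0 : 0 < dl by rewrite lt_min r0 divr_gt0 // mulr_gt0.
have dlr : dl <= r by rewrite ge_min lexx.
have dlm : d%:R * dl < m.
  have h : dl <= m / (2 * D) by rewrite ge_min lexx orbT.
  have : D * dl <= m / 2.
    rewrite mulrC; apply: (le_trans (ler_wpM2r (ltW D0) h)).
    rewrite le_eqVlt; apply/orP; left; apply/eqP; field; by rewrite gt_eqF.
  rewrite /D; lra.
have other (x : 'rV[R]_d) : (forall k, `|x ord0 k - y ord0 k| <= dl) ->
    forall j, j != i0 -> Hi (b j) (w j) x = Hi (b j) (w j) y.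
  move=> hx j ji; rewrite /Hi.
  have -> : dotv (w j) x + b j = (dotv (w j) y + b j) + dotv (w j) (x - y).
    by rewrite dotvBr; ring.
  apply: heav_stable; apply: (le_lt_trans (dotv_bound (uw j) (e := dl) _)).
    by move=> k; rewrite !mxE.
  exact: lt_le_trans dlm (mle j ji).
pose t := dl / 2.
have t0 : 0 < t by rewrite divr_gt0.
pose rho := dl / (2 * D).
have rho0 : 0 < rho by rewrite divr_gt0 // mulr_gt0.
have rhot : rho + t <= dl.
  have ha : rho * D = t by rewrite /rho /t; field; rewrite gt_eqF.
  have D1 : 1 <= D by rewrite /D lerDr ler0n.
  have : rho <= t by nra.
  rewrite /t; lra.
have drho : d%:R * rho < t.
  rewrite /rho /t; have h : d%:R * (dl / (2 * D)) = (dl / 2) * (d%:R / D).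
    by field; rewrite gt_eqF.
  rewrite h gtr_pMr // ltr_pdivrMr // mul1r /D ltrDl; lra.
pose hv (tau : R) (i : 'I_n) := if i == i0 then heaviside tau else Hi (b i) (w i) y.
have key (tau : R) : `|tau| = t ->
    \sum_i hv tau i * c (i, ord0) = 0 /\
    forall j : 'I_d, \sum_i hv tau i * c (i, lift ord0 j) = 0.
  move=> htau.
  apply: (@affine_coef _ _ _ _ (y + tau *: w i0) rho _ _ rho0 Hae) => x hx.
  have hxy k : `|x ord0 k - y ord0 k| <= dl.
    have /andP [a1 a2] := hx k; move: a1 a2; rewrite !mxE => a1 a2.
    have hw := unit_le1 (uw i0) k.
    have : `|tau * w i0 ord0 k| <= t.
      by rewrite normrM -htau -[X in _ <= X]mulr1; apply: ler_pM.
    rewrite ler_norml => /andP [a3 a4]; rewrite ler_norml; apply/andP; split; lra.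
  split; first by apply: Hr => k; exact: le_trans (hxy k) dlr.
  rewrite ridge_sum -sum_reorg; apply: eq_bigr => i _; congr (_ * _).
  rewrite /hv; case: eqP => [->|/eqP ji]; last exact: other.
  rewrite /Hi.
  have -> : dotv (w i0) x + b i0 = tau + dotv (w i0) (x - (y + tau *: w i0)).
    rewrite dotvBr dotvDr dotvZr.
    have -> : dotv (w i0) (w i0) = 1 by exact: (uw i0).
    lra.
  apply: heav_stable; rewrite htau; apply: (le_lt_trans _ drho).
  apply: dotv_bound => // k; have /andP [a1 a2] := hx k.
  move: a1 a2; rewrite !mxE => a1 a2.
  rewrite ler_norml; apply/andP; split; lra.
have [Cp Ap] := key t (gtr0_norm t0).
have hmt : `|- t| = t by rewrite normrN gtr0_norm.
have [Cm Am] := key (- t) hmt.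
have diff (f : 'I_n -> R) : \sum_i hv t i * f i - \sum_i hv (- t) i * f i = f i0.
  rewrite -sumrB (bigD1 i0) //= big1 ?addr0.
    rewrite /hv eqxx /heaviside t0.
    have -> : (0 < - t) = false by apply/negbTE; rewrite -leNgt oppr_le0 ltW.
    by rewrite mul1r mul0r subr0.
  by move=> i ii0; rewrite /hv (negbTE ii0) subrr.
split.
  by have := diff (fun i => c (i, ord0)); rewrite /= Cp Cm subrr.
by move=> j; have := diff (fun i => c (i, lift ord0 j)); rewrite /= Ap Am subrr.
Qed.
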